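(* Let $P=(p_{ij})$ be the transition matrix of an absorbing Markov chain on states $1,\dots,s$, where states $1,\dots,r$ are transient and states $r+1,\dots,s$ are absorbing. Assume all transition probabilities are rational and, for each transient state $i$, write $p_{ij}=r_{ij}/r_i$ with $r_i$ a positive integer and $r_{ij}$ nonnegative integers (so $\sum_{j=1}^s r_{ij}=r_i$). Fix a transient state $u$ and run the chip-moving procedure (Engel's algorithm) described below, starting from the critical loading. Then: (a) the procedure terminates, i.e. after finitely many moves the critical loading on the transient states recurs (whatever order is used for the available type 1 moves); (b) at termination, let $w_{uj}$ (for transient $j$) be the total number of chips moved out of state $j$ during the whole run (i.e. $r_j$ times the number of type 1 moves made at $j$), let $v_{uk}$ (for absorbing $k$) be the total number of chips moved into state $k$ during the run, and let $v_u=\sum_{k=r+1}^{s} v_{uk}$. Then $v_u>0$ and, for every transient state $j$ and every absorbing state $k$, \[ N_{uj}=\frac{w_{uj}}{v_u},\qquad B_{uk}=\frac{v_{uk}}{v_u}, \] where $N_{uj}$ is the expected number of visits (counting time $0$) to state $j$ for the chain started at $u$, and $B_{uk}$ is the probability that the chain started at $u$ is eventually absorbed in state $k$. Equivalently, writing $Q=(p_{ij})_{1\le i,j\le r}$ and $R=(p_{ik})_{1\le i\le r<k\le s}$, $N=(I-Q)^{-1}$ and $B=NR$.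
   Context: An absorbing Markov chain is a finite Markov chain in which absorbing states (states $j$ with $p_{jj}=1$) exist and from every state some absorbing state can be reached; the non-absorbing states are transient. Chip-moving procedure. A configuration is an assignment of a nonnegative integer number of chips to each state $1,\dots,s$. Two kinds of moves are allowed: - Type 1 move at a transient state $i$: allowed only if state $i$ holds at least $r_i$ chips; it removes $r_i$ chips from $i$ and sends $r_{ij}$ of them to state $j$ for each $j=1,\dots,s$. - Type 2 move: add one new chip to state $u$; allowed only when no type 1 move is possible. The critical loading (for $u$) is the configuration with $r_i-1$ chips on each transient state $i\ne u$, $r_u$ chips on $u$, and $0$ chips on every absorbing state. The procedure starts from the critical loading and repeats the following round: perform type 1 moves as long as any is possible; when none is possible, perform type 2 moves until state $u$ holds exactly $r_u$ chips; then, if the numbers of chips on the transient states $1,\dots,r$ coincide with the critical loading ($r_i-1$ on $i\ne u$, $r_u$ on $u$), stop; otherwise start another round. *)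

(* Defs.v *)
From mathcomp Require Import all_boot all_order all_algebra.
Set Implicit Arguments. Unset Strict Implicit. Unset Printing Implicit Defensive.
Import GRing.Theory Num.Theory.

(* Chain data: r transient states 'I_r, a absorbing states 'I_a (so s = r + a).
   For transient i:  p_ij = rT i j / rr i  (j transient),
                     p_ik = rA i k / rr i  (k absorbing).
   Absorbing states k have p_kk = 1. *)

Local Open Scope ring_scope.
Definition Qmx r (rr : 'I_r -> nat) (rT : 'I_r -> 'I_r -> nat) : 'M[rat]_r :=
  \matrix_(i, j) ((rT i j)%:R / (rr i)%:R).
Definition Rmx r a (rr : 'I_r -> nat) (rA : 'I_r -> 'I_a -> nat) : 'M[rat]_(r, a) :=
  \matrix_(i, k) ((rA i k)%:R / (rr i)%:R).

Definition Nmx r rr rT : 'M[rat]_r := invmx (1%:M - @Qmx r rr rT).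
Definition Bmx r a rr rT rA : 'M[rat]_(r, a) := @Nmx r rr rT *m @Rmx r a rr rA.

Local Close Scope ring_scope.
Definition absorbing_reachable r a (rT : 'I_r -> 'I_r -> nat)
    (rA : 'I_r -> 'I_a -> nat) : Prop :=
  forall i : 'I_r, exists (i' : 'I_r) (k : 'I_a),
    connect (fun x y => 0 < rT x y) i i' /\ 0 < rA i' k.

Record config (r a : nat) := Config { tr : 'I_r -> nat; ab : 'I_a -> nat }.

Inductive move (r : nat) := Fire of 'I_r | AddChip.
Arguments AddChip {r}.

Definition step r a (rr : 'I_r -> nat) (rT : 'I_r -> 'I_r -> nat)
    (rA : 'I_r -> 'I_a -> nat) (u : 'I_r)
    (c : config r a) (m : move r) (c' : config r a) : Prop :=
  match m with
  | Fire i =>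
      rr i <= tr c i /\
      (forall j, tr c' j = tr c j - (if j == i then rr i else 0) + rT i j) /\
      (forall k, ab c' k = ab c k + rA i k)
  | AddChip =>
      (* type 2 move: allowed only when no type 1 move is possible *)
      (forall i, tr c i < rr i) /\
      (forall j, tr c' j = tr c j + (j == u)) /\
      (forall k, ab c' k = ab c k)
  end.

Definition crit r (rr : 'I_r -> nat) (u : 'I_r) (j : 'I_r) : nat :=
  if j == u then rr u else (rr j).-1.

Definition is_initial r a rr u (c : config r a) : Prop :=
  (forall j, tr c j = crit rr u j) /\ (forall k, ab c k = 0).

(* the round ends after a type 2 move; stop iff transient chips are critical *)
Definition stops r a rr u (m : move r) (c' : config r a) : Prop :=
  m = AddChip /\ forall j, tr c' j = crit rr u j.

Definition fired_at r (m : move r) (j : 'I_r) : nat :=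
  match m with Fire i => (i == j) | AddChip => 0 end.
Definition chips_in r a (rA : 'I_r -> 'I_a -> nat) (m : move r) (k : 'I_a) : nat :=
  match m with Fire i => rA i k | AddChip => 0 end.

Definition wcount r (rr : 'I_r -> nat) (ms : nat -> move r) (n : nat) (j : 'I_r) : nat :=
  rr j * \sum_(t < n) fired_at (ms t) j.
Definition vcount r a (rA : 'I_r -> 'I_a -> nat) (ms : nat -> move r) (n : nat)
    (k : 'I_a) : nat :=
  \sum_(t < n) chips_in rA (ms t) k.

(* Main.v *)
Require Import Defs.
From mathcomp Require Import all_boot all_order all_algebra.
From mathcomp Require Import ring lra zify.
Import GRing.Theory Num.Theory Order.TTheory.
Set Implicit Arguments. Unset Strict Implicit.
Local Open Scope ring_scope.

Lemma path_closed (T : finType) (e : rel T) (S : pred T) :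
  (forall x y, S x -> e x y -> S y) ->
  forall x y, S x -> connect e x y -> S y.
Proof.
move=> HS x y Sx /connectP [p Hp ->]; elim: p x Sx Hp => [|z p IH] x Sx //=.
case/andP=> exz Hp; apply: IH Hp; exact: HS exz.
Qed.

Lemma colpos r a (rr : 'I_r -> nat) (rT : 'I_r -> 'I_r -> nat)
    (rA : 'I_r -> 'I_a -> nat)
    (rr_pos : forall i, (0 < rr i)%N)
    (rows : forall i, (\sum_j rT i j + \sum_k rA i k)%N = rr i)
    (absorbing : absorbing_reachable rT rA) (c : 'I_r -> rat) :
  (forall i, \sum_j (rT i j)%:R * c j <= (rr i)%:R * c i) -> forall i, 0 <= c i.
Proof.
move=> Hc i; rewrite leNgt; apply/negP => ci.
pose i0 := [arg min_(j < i) c j]%O.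
have Hmin : forall j, c i0 <= c j.
  by rewrite /i0; case: arg_minP => // k _ H j; apply: H.
have c0 : c i0 < 0 by apply: le_lt_trans (Hmin i) ci.
have key : forall j, c j = c i0 ->
    (\sum_k rA j k = 0)%N /\ forall j', (0 < rT j j')%N -> c j' = c i0.
  move=> j cj.
  have E1 : 0 <= \sum_j' (rT j j')%:R * (c j' - c j).
    apply: sumr_ge0 => j' _; apply: mulr_ge0; first by rewrite ler0n.
    by rewrite subr_ge0 cj.
  have E2 : \sum_j' (rT j j')%:R * (c j' - c j) =
        \sum_j' (rT j j')%:R * c j' - (\sum_j' rT j j')%:R * c j.
    rewrite natr_sum mulr_suml -sumrB; apply: eq_bigr => j' _; ring.
  have Hr := rows j.
  have E3 : (rr j)%:R = (\sum_j' rT j j')%:R + (\sum_k rA j k)%:R :> rat.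
    by rewrite -natrD Hr.
  have cj0 : c j < 0 by rewrite cj.
  have Hcj := Hc j.
  set s1 := \sum_j' (rT j j')%:R * c j' in E2 Hcj.
  set s2 := ((\sum_j' rT j j')%:R : rat) in E2 E3.
  set s3 := ((\sum_k rA j k)%:R : rat) in E3.
  have s3ge : 0 <= s3 by rewrite /s3 ler0n.
  have s30 : s3 * c j = 0 by nra.
  split.
    move: s30 => /eqP; rewrite mulf_eq0 (negbTE (ltr0_neq0 cj0)) orbF /s3 pnatr_eq0.
    by move/eqP.
  have Es : \sum_j' (rT j j')%:R * (c j' - c j) = 0 by nra.
  move=> j' pos.
  have H0 : forall i1 : 'I_r, true -> 0 <= (rT j i1)%:R * (c i1 - c j).
    by move=> i1 _; apply: mulr_ge0; [rewrite ler0n | rewrite subr_ge0 cj].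
  have := @psumr_eq0P _ _ xpredT _ H0 Es j' isT.
  move=> /eqP.
  rewrite mulf_eq0 pnatr_eq0 (negbTE (lt0n_neq0 pos)) /= subr_eq0 => /eqP ->; done.
have [i' [k [conn pk]]] := absorbing i0.
have Si' : (c i' == c i0).
  apply: (@path_closed _ _ (fun x => c x == c i0) _ i0 i') conn => //.
  move=> x y /eqP cx exy; apply/eqP; exact: (key x cx).2.
move/eqP: Si' => /key [Hs _].
move: Hs => /eqP; rewrite sum_nat_eq0 => /forallP /(_ k); by rewrite (negbTE (lt0n_neq0 pk)).
Qed.

Lemma mulA_l r (rr : 'I_r -> nat) rT n (M : 'M[rat]_(r, n)) i k :
  ((1%:M - Qmx rr rT) *m M) i k = M i k - \sum_j Qmx rr rT i j * M j k.
Proof. by rewrite mulmxBl mul1mx !mxE. Qed.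

Lemma mulA_r r (rr : 'I_r -> nat) rT n (M : 'M[rat]_(n, r)) i k :
  (M *m (1%:M - Qmx rr rT)) i k = M i k - \sum_j M i j * Qmx rr rT j k.
Proof. by rewrite mulmxBr mulmx1 !mxE. Qed.

Lemma Qsum r (rr : 'I_r -> nat) rT (rr_pos : forall i, (0 < rr i)%N) i (c : 'I_r -> rat) :
  \sum_j Qmx rr rT i j * c j = (\sum_j (rT i j)%:R * c j) / (rr i)%:R.
Proof.
rewrite mulr_suml; apply: eq_bigr => j _; rewrite mxE; field.
by rewrite pnatr_eq0 -lt0n rr_pos.
Qed.

Lemma colpos' r a (rr : 'I_r -> nat) (rT : 'I_r -> 'I_r -> nat)
    (rA : 'I_r -> 'I_a -> nat)
    (rr_pos : forall i, (0 < rr i)%N)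
    (rows : forall i, (\sum_j rT i j + \sum_k rA i k)%N = rr i)
    (absorbing : absorbing_reachable rT rA) (c : 'I_r -> rat) :
  (forall i, 0 <= c i - \sum_j Qmx rr rT i j * c j) -> forall i, 0 <= c i.
Proof.
move=> H; apply: (colpos rr_pos rows absorbing (c:=c)) => i.
have := H i; rewrite Qsum // subr_ge0 => Hi.
have rp : 0 < (rr i)%:R :> rat by rewrite ltr0n.
by rewrite mulrC -(ler_pdivrMr _ _ rp).
Qed.

Lemma A_unit r a (rr : 'I_r -> nat) (rT : 'I_r -> 'I_r -> nat)
    (rA : 'I_r -> 'I_a -> nat)
    (rr_pos : forall i, (0 < rr i)%N)
    (rows : forall i, (\sum_j rT i j + \sum_k rA i k)%N = rr i)
    (absorbing : absorbing_reachable rT rA) :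
  (1%:M - Qmx rr rT) \in unitmx.
Proof.
rewrite -unitmx_tr unitmxE unitfE; apply/negP => /det0P [v vn0 Hv].
move: vn0 => /eqP; apply; apply/matrixP => z i; rewrite (ord1 z) mxE.
have Hv' : (1%:M - Qmx rr rT) *m v^T = 0 by rewrite -[LHS]trmxK trmx_mul trmxK Hv trmx0.
have E : forall i, v^T i 0 - \sum_j Qmx rr rT i j * v^T j 0 = 0.
  by move=> i1; rewrite -mulA_l Hv' mxE.
have P1 := colpos' rr_pos rows absorbing (c := fun i => v^T i 0).
have P2 := colpos' rr_pos rows absorbing (c := fun i => - v^T i 0).
apply/eqP; rewrite eq_le; apply/andP; split.
  rewrite -oppr_ge0; have := P2 _ i; rewrite mxE; apply => i1.
  under eq_bigr do rewrite mulrN.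
  by rewrite sumrN opprK addrC -opprB E oppr0 lexx.
have := P1 _ i; rewrite mxE; apply => i1; by rewrite E.
Qed.

Lemma N_ge0 r a (rr : 'I_r -> nat) (rT : 'I_r -> 'I_r -> nat)
    (rA : 'I_r -> 'I_a -> nat)
    (rr_pos : forall i, (0 < rr i)%N)
    (rows : forall i, (\sum_j rT i j + \sum_k rA i k)%N = rr i)
    (absorbing : absorbing_reachable rT rA) i k :
  0 <= Nmx rr rT i k.
Proof.
have U := A_unit rr_pos rows absorbing.
apply: (colpos' rr_pos rows absorbing (c := fun j => Nmx rr rT j k)) => i1.
by rewrite -mulA_l /Nmx mulmxV // mxE ler0n.
Qed.

Lemma row_zero r a (rr : 'I_r -> nat) (rT : 'I_r -> 'I_r -> nat)
    (rA : 'I_r -> 'I_a -> nat)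
    (rr_pos : forall i, (0 < rr i)%N)
    (rows : forall i, (\sum_j rT i j + \sum_k rA i k)%N = rr i)
    (absorbing : absorbing_reachable rT rA) (y : 'I_r -> rat) :
  (forall j, 0 <= y j) -> (forall j, y j - \sum_i y i * Qmx rr rT i j <= 0) ->
  forall j, y j = 0.
Proof.
move=> y0 yL j.
have U := A_unit rr_pos rows absorbing.
pose Y : 'rV[rat]_r := \row_j y j.
have EY : Y = (Y *m (1%:M - Qmx rr rT)) *m Nmx rr rT by rewrite /Nmx mulmxK.
have : Y 0 j = ((Y *m (1%:M - Qmx rr rT)) *m Nmx rr rT) 0 j by rewrite -EY.
rewrite mxE !mxE => ->.
suff : (\sum_j0 (Y *m (1%:M - Qmx rr rT)) 0 j0 * Nmx rr rT j0 j) <= 0.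
  move=> H; apply/eqP; rewrite eq_le H /=.
  have := y0 j; have : Y 0 j = ((Y *m (1%:M - Qmx rr rT)) *m Nmx rr rT) 0 j by rewrite -EY.
  by rewrite mxE !mxE => ->.
rewrite -oppr_ge0 -sumrN; apply: sumr_ge0 => k _.
rewrite -mulNr; apply: mulr_ge0; last exact: (N_ge0 rr_pos rows absorbing).
rewrite oppr_ge0 mulA_r mxE.
under eq_bigr do rewrite mxE.
exact: yL.
Qed.

Definition Lf r (rr : 'I_r -> nat) (rT : 'I_r -> 'I_r -> nat) (x : 'I_r -> rat) j : rat :=
  (rr j)%:R * x j - \sum_i x i * (rT i j)%:R.

Lemma LfQ r (rr : 'I_r -> nat) rT (rr_pos : forall i, (0 < rr i)%N) (x : 'I_r -> rat) j :
  (rr j)%:R * x j - \sum_i ((rr i)%:R * x i) * Qmx rr rT i j = Lf rr rT x j.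
Proof.
rewrite /Lf; congr (_ - _); apply: eq_bigr => i _; rewrite mxE; field.
by rewrite pnatr_eq0 -lt0n rr_pos.
Qed.

Lemma Lf_ext r (rr : 'I_r -> nat) rT (x y : 'I_r -> rat) j :
  (forall i, x i = y i) -> Lf rr rT x j = Lf rr rT y j.
Proof. by move=> H; rewrite /Lf H; congr (_ - _); apply: eq_bigr => i _; rewrite H. Qed.

Lemma Lf_lin r (rr : 'I_r -> nat) rT (x y : 'I_r -> rat) (al be : rat) j :
  Lf rr rT (fun i => al * x i + be * y i) j = al * Lf rr rT x j + be * Lf rr rT y j.
Proof.
rewrite /Lf.
have -> : \sum_i (al * x i + be * y i) * (rT i j)%:R =
   al * \sum_i x i * (rT i j)%:R + be * \sum_i y i * (rT i j)%:R.
  rewrite !mulr_sumr -big_split; apply: eq_bigr => i _ /=; ring.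
ring.
Qed.

Lemma int_sol r a (rr : 'I_r -> nat) (rT : 'I_r -> 'I_r -> nat)
    (rA : 'I_r -> 'I_a -> nat)
    (rr_pos : forall i, (0 < rr i)%N)
    (rows : forall i, (\sum_j rT i j + \sum_k rA i k)%N = rr i)
    (absorbing : absorbing_reachable rT rA) (u : 'I_r) :
  exists (xs : 'I_r -> nat) (m : nat), (0 < m)%N /\
    forall j, Lf rr rT (fun i => (xs i)%:R) j = m%:R * (j == u)%:R.
Proof.
have U := A_unit rr_pos rows absorbing.
pose z j := Nmx rr rT u j / (rr j)%:R.
have rn0 : forall j, (rr j)%:R != 0 :> rat by move=> j; rewrite pnatr_eq0 -lt0n rr_pos.
have z0 : forall j, 0 <= z j.
  move=> j; apply: divr_ge0; [exact: (N_ge0 rr_pos rows absorbing) | exact: ler0n].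
have Lz : forall j, Lf rr rT z j = (j == u)%:R.
  move=> j; rewrite -LfQ //.
  have E : forall i, (rr i)%:R * z i = Nmx rr rT u i.
    by move=> i; rewrite /z mulrC divfK.
  rewrite E; under eq_bigr do rewrite E.
  by rewrite -(@mulA_r _ _ _ _ (Nmx rr rT)) /Nmx mulVmx // mxE eq_sym.
pose D : int := \prod_k denq (z k).
have Dpos : 0 < D by apply: prodr_gt0 => k _; exact: denq_gt0.
pose xi j : int := numq (z j) * \prod_(k | k != j) denq (z k).
have xi0 : forall j, 0 <= xi j.
  move=> j; apply: mulr_ge0; first by rewrite numq_ge0.
  by apply: prodr_ge0 => k _; apply: ltW; exact: denq_gt0.
have xiE : forall j, (xi j)%:~R = D%:~R * z j :> rat.
  move=> j; rewrite /xi /D [in RHS](bigD1 j) //= !intrM numqE; ring.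
exists (fun j => `|xi j|%N); exists (`|D|%N); split.
  by rewrite absz_gt0 gt_eqF.
move=> j.
rewrite (@Lf_ext _ _ _ _ (fun i => D%:~R * z i + 0 * z i :> rat)); last first.
  move=> i; rewrite natr_absz ger0_norm // xiE; ring.
by rewrite Lf_lin Lz natr_absz gtr0_norm //; ring.
Qed.

Definition Xc r (ms : nat -> move r) t (i : 'I_r) : nat := (\sum_(s < t) fired_at (ms s) i)%N.
Definition addc r (m : move r) : nat := match m with AddChip => 1%N | _ => 0%N end.
Definition Mc r (ms : nat -> move r) t : nat := (\sum_(s < t) addc (ms s))%N.

Lemma sum_e r (F : 'I_r -> rat) i : \sum_i' (i == i')%:R * F i' = F i.
Proof.
rewrite (bigD1 i) //= eqxx mul1r big1 ?addr0 // => i' /negbTE; rewrite eq_sym => ->.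
by rewrite mul0r.
Qed.

Lemma Lf_e r (rr : 'I_r -> nat) rT (x : 'I_r -> rat) i j :
  Lf rr rT (fun i' => x i' + (i == i')%:R) j =
  Lf rr rT x j + (rr j)%:R * (i == j)%:R - (rT i j)%:R.
Proof.
rewrite /Lf.
have -> : \sum_i' (x i' + (i == i')%:R) * (rT i' j)%:R =
   \sum_i' x i' * (rT i' j)%:R + (rT i j)%:R.
  rewrite -(sum_e (fun i' => (rT i' j)%:R) i) -big_split; apply: eq_bigr => i' _ /=; ring.
ring.
Qed.

Lemma invariant r a (rr : 'I_r -> nat) (rT : 'I_r -> 'I_r -> nat)
    (rA : 'I_r -> 'I_a -> nat) (u : 'I_r) (ms : nat -> move r) (cs : nat -> config r a) t :
  is_initial rr u (cs 0%N) ->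
  (forall s, (s < t)%N -> step rr rT rA u (cs s) (ms s) (cs s.+1)) ->
  (forall j, (tr (cs t) j)%:R = (crit rr u j)%:R - Lf rr rT (fun i => (Xc ms t i)%:R) j
       + (Mc ms t)%:R * (j == u)%:R :> rat)
  /\ (forall k, ab (cs t) k = vcount rA ms t k).
Proof.
move=> [I1 I2]; elim: t => [|t IH] Hs.
  split=> [j|k]; last by rewrite I2 /vcount big_ord0.
  rewrite I1 /Mc big_ord0 mul0r addr0 /Lf.
  rewrite big1 => [|i _]; last by rewrite /Xc big_ord0 mul0r.
  by rewrite /Xc big_ord0 mulr0 subrr subr0.
have [IH1 IH2] := IH (fun s hs => Hs s (ltnW hs)).
have St := Hs t (ltnSn t).
have XcS : forall i, Xc ms t.+1 i = (Xc ms t i + fired_at (ms t) i)%N.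
  by move=> i; rewrite /Xc big_ord_recr.
have McS : Mc ms t.+1 = (Mc ms t + addc (ms t))%N by rewrite /Mc big_ord_recr.
have vS : forall k, vcount rA ms t.+1 k = (vcount rA ms t k + chips_in rA (ms t) k)%N.
  by move=> k; rewrite /vcount big_ord_recr.
move: St; case E: (ms t) => [i|] /= St.
  case: St => [le [H1 H2]]; split=> [j|k]; last by rewrite H2 vS IH2 E.
  rewrite H1 natrD natrB; last first.
    by case: eqP => [->|_] //.
  rewrite (@Lf_ext _ _ _ _ (fun i' => (Xc ms t i')%:R + (i == i')%:R)); last first.
    by move=> i'; rewrite XcS E natrD.
  rewrite IH1 McS E addn0.
  rewrite Lf_e.
  case: (eqVneq j i) => [->|ne]; first by rewrite /= mulr1; ring.
  rewrite /= mulr0 !subr0; ring.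
case: St => [lt [H1 H2]]; split=> [j|k]; last by rewrite H2 vS IH2 E addn0.
rewrite (@Lf_ext _ _ _ _ (fun i' => (Xc ms t i')%:R)); last first.
  by move=> i'; rewrite XcS E addn0.
rewrite H1 natrD IH1 McS E.
rewrite /= natrD; ring.
Qed.

Lemma rowN r a (rr : 'I_r -> nat) (rT : 'I_r -> 'I_r -> nat)
    (rA : 'I_r -> 'I_a -> nat)
    (rr_pos : forall i, (0 < rr i)%N)
    (rows : forall i, (\sum_j rT i j + \sum_k rA i k)%N = rr i)
    (absorbing : absorbing_reachable rT rA) (y : 'I_r -> rat) j :
  y j = \sum_k (y k - \sum_i y i * Qmx rr rT i k) * Nmx rr rT k j.
Proof.
have U := A_unit rr_pos rows absorbing.
pose Y : 'rV[rat]_r := \row_j y j.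
have EY : Y = (Y *m (1%:M - Qmx rr rT)) *m Nmx rr rT by rewrite /Nmx mulmxK.
have : Y 0 j = ((Y *m (1%:M - Qmx rr rT)) *m Nmx rr rT) 0 j by rewrite -EY.
rewrite !mxE => ->; apply: eq_bigr => k _; rewrite mulA_r !mxE.
by under eq_bigr do rewrite mxE.
Qed.

Lemma vcountE r a (rA : 'I_r -> 'I_a -> nat) (ms : nat -> move r) t k :
  (vcount rA ms t k)%:R = \sum_i (Xc ms t i)%:R * (rA i k)%:R :> rat.
Proof.
elim: t => [|t IH].
  by rewrite /vcount big_ord0 big1 // => i _; rewrite /Xc big_ord0 mul0r.
rewrite /vcount big_ord_recr /= natrD -/(vcount rA ms t k) IH.
under [RHS]eq_bigr do rewrite /Xc big_ord_recr /= -/(Xc ms t _) natrD mulrDl.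
rewrite big_split /=; congr (_ + _).
case: (ms t) => [i0|] /=; last by rewrite big1 // => i _; rewrite mul0r.
by rewrite -(sum_e (fun i => (rA i k)%:R) i0).
Qed.

Lemma partb r a (rr : 'I_r -> nat) (rT : 'I_r -> 'I_r -> nat)
    (rA : 'I_r -> 'I_a -> nat) (u : 'I_r)
    (rr_pos : forall i, (0 < rr i)%N)
    (rows : forall i, (\sum_j rT i j + \sum_k rA i k)%N = rr i)
    (absorbing : absorbing_reachable rT rA)
    (n : nat) (ms : nat -> move r) (cs : nat -> config r a) :
      is_initial rr u (cs 0%N) ->
      (forall t, (t < n)%N -> step rr rT rA u (cs t) (ms t) (cs t.+1)) ->
      (0 < n)%N -> stops rr u (ms n.-1) (cs n) ->
      let vu := (\sum_k vcount rA ms n k)%N in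
      (0 < vu)%N /\
      (1%:M - Qmx rr rT) \in unitmx /\
      (forall j, Nmx rr rT u j = (wcount rr ms n j)%:R / vu%:R) /\
      (forall k, Bmx rr rT rA u k = (vcount rA ms n k)%:R / vu%:R).
Proof.
move=> init Hs n0 [Eadd Ecrit] vu.
have U := A_unit rr_pos rows absorbing.
have [I1 _] := invariant init Hs.
set X := fun i => (Xc ms n i)%:R : rat.
set M := Mc ms n.
have LX : forall j, Lf rr rT X j = M%:R * (j == u)%:R.
  move=> j; have := I1 j; rewrite Ecrit => /eqP; rewrite -subr_eq0.
  move=> /eqP H; apply/eqP; rewrite -subr_eq0; apply/eqP; rewrite -[RHS]H; ring.
have Mpos : (0 < M)%N.
  by rewrite /M /Mc -(prednK n0) big_ord_recr /= Eadd addn1.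
have rn0 : forall j, (rr j)%:R != 0 :> rat by move=> j; rewrite pnatr_eq0 -lt0n rr_pos.
have Mn0 : M%:R != 0 :> rat by rewrite pnatr_eq0 -lt0n.
have vuM : vu = M.
  apply/eqP; rewrite -(eqr_nat rat) /vu natr_sum.
  under eq_bigr do rewrite vcountE.
  rewrite exchange_big /=.
  have -> : M%:R = \sum_j Lf rr rT X j :> rat.
    by rewrite (bigD1 u) //= LX eqxx mulr1 big1 ?addr0 // => j /negbTE H; rewrite LX H mulr0.
  rewrite /Lf sumrB [X in _ - X]exchange_big -sumrB; apply/eqP; apply: eq_bigr => i _ /=.
  rewrite /X -!mulr_sumr -!natr_sum -(rows i) natrD; ring.
have NE : forall j, Nmx rr rT u j = (wcount rr ms n j)%:R / M%:R.
  move=> j.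
  have := rowN rr_pos rows absorbing (fun i => (rr i)%:R * X i) j.
  under eq_bigr do rewrite LfQ // LX.
  rewrite (bigD1 u) //= eqxx mulr1 big1 ?addr0; last first.
    by move=> k /negbTE ->; rewrite !mulr0 mul0r.
  by rewrite /wcount natrM => ->; rewrite mulrC mulKf.
split; first by rewrite vuM.
split=> //; split=> [j|k]; first by rewrite vuM NE.
rewrite /Bmx mxE vuM.
under eq_bigr do rewrite NE mxE /wcount natrM.
rewrite vcountE mulr_suml; apply: eq_bigr => i _; field.
by rewrite Mn0 rn0.
Qed.

Lemma count_moves r (ms : nat -> move r) t :
  t = (\sum_i Xc ms t i + Mc ms t)%N.
Proof.
rewrite /Xc /Mc exchange_big /= -big_split /=.
rewrite -[LHS]card_ord -sum1_card; apply: eq_bigr => s _.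
case: (ms s) => [i0|] /=; last by rewrite big1.
rewrite addn0 (bigD1 i0) //= eqxx big1 // => i /negbTE; rewrite eq_sym => ->.
by [].
Qed.

Lemma parta r a (rr : 'I_r -> nat) (rT : 'I_r -> 'I_r -> nat)
    (rA : 'I_r -> 'I_a -> nat) (u : 'I_r)
    (rr_pos : forall i, (0 < rr i)%N)
    (rows : forall i, (\sum_j rT i j + \sum_k rA i k)%N = rr i)
    (absorbing : absorbing_reachable rT rA)
    (ms : nat -> move r) (cs : nat -> config r a) :
  is_initial rr u (cs 0%N) ->
  (forall t, step rr rT rA u (cs t) (ms t) (cs t.+1)) ->
  exists t, stops rr u (ms t) (cs t.+1).
Proof.
move=> init Hs.
have [xs [m [m0 Lxs]]] := int_sol rr_pos rows absorbing u.
have rn0 : forall j, (rr j)%:R != 0 :> rat by move=> j; rewrite pnatr_eq0 -lt0n rr_pos.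
have critE : forall j, j != u -> (crit rr u j)%:R = (rr j)%:R - 1 :> rat.
  move=> j /negbTE H; rewrite /crit H -(prednK (rr_pos j)) /=; rewrite -natr1; ring.
have critu : (crit rr u u) = rr u by rewrite /crit eqxx.
have trD : forall t, (forall j, (tr (cs t) j)%:R = (crit rr u j)%:R
     + Lf rr rT (fun i => (xs i)%:R - (Xc ms t i)%:R) j
     - (m%:R - (Mc ms t)%:R) * (j == u)%:R :> rat).
  move=> t j; have [I1 _] := invariant (t:=t) init (fun s _ => Hs s).
  rewrite I1 (@Lf_ext _ _ _ (fun i => (xs i)%:R - (Xc ms t i)%:R) (fun i => 1 * (xs i)%:R + (-1) * (Xc ms t i)%:R)) ?Lf_lin ?Lxs;
    last by move=> i; ring.
  ring.
have claim : forall t, (exists s, (s < t)%N /\ stops rr u (ms s) (cs s.+1)) \/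
   ((forall i, (Xc ms t i <= xs i)%N) /\ (Mc ms t < m)%N).
  elim=> [|t IH].
    by right; split=> [i|]; rewrite /Xc /Mc big_ord0.
  case: IH => [[s [st Hst]]|[HX HM]]; first by left; exists s; split => //; apply: ltnW.
  have XcS : forall i, Xc ms t.+1 i = (Xc ms t i + fired_at (ms t) i)%N.
    by move=> i; rewrite /Xc big_ord_recr.
  have McS : Mc ms t.+1 = (Mc ms t + addc (ms t))%N by rewrite /Mc big_ord_recr.
  have St := Hs t.
  move: St XcS McS; case E: (ms t) => [i|] /= St XcS McS.
    right; split; last by rewrite McS addn0.
    move=> j; rewrite XcS; case: (eqVneq i j) => [<-|ne]; last by rewrite addn0 HX.
    rewrite addn1 ltn_neqAle HX andbT; apply/eqP => Heq.
    case: St => [le _].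
    have := trD t i.
    have Di : (xs i)%:R - (Xc ms t i)%:R = 0 :> rat by rewrite Heq subrr.
    have LD : Lf rr rT (fun i0 => (xs i0)%:R - (Xc ms t i0)%:R) i <= 0.
      rewrite /Lf Di mulr0 sub0r oppr_le0; apply: sumr_ge0 => k _.
      by apply: mulr_ge0; rewrite ?ler0n // subr_ge0 ler_nat HX.
    have Mlt : 1 <= m%:R - (Mc ms t)%:R :> rat.
      by rewrite lerBrDr addrC natr1 ler_nat.
    have lerat : (rr i)%:R <= (tr (cs t) i)%:R :> rat by rewrite ler_nat.
    case: (eqVneq i u) => [eiu|niu].
      subst i; rewrite critu /= mulr1 => Etr; move: lerat; rewrite Etr.
      lra.
    rewrite critE // /= mulr0 subr0 => Etr; move: lerat; rewrite Etr; lra.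
  case: St => [lt [H1 H2]].
  have HX' : forall i, (Xc ms t.+1 i <= xs i)%N by move=> i; rewrite XcS addn0 HX.
  case: (ltnP (Mc ms t).+1 m) => Hm.
    by right; split => //; rewrite McS addn1.
  have Meq : Mc ms t.+1 = m by rewrite McS addn1; apply/eqP; rewrite eqn_leq Hm HM.
  left; exists t; split => //; split => // j.
  set D := fun i0 => (xs i0)%:R - (Xc ms t.+1 i0)%:R : rat.
  have trD' : forall j, (tr (cs t.+1) j)%:R = (crit rr u j)%:R + Lf rr rT D j :> rat.
    by move=> j1; rewrite trD Meq subrr mul0r subr0.
  have LDle : forall j, Lf rr rT D j <= 0.
    move=> j1; have := trD' j1; rewrite H1.
    case: (eqVneq j1 u) => [ej|nj].
      subst j1; rewrite critu /= addn1 -natr1 => E1.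
      have : ((tr (cs t) u)%:R + 1 <= (rr u)%:R :> rat) by rewrite natr1 ler_nat.
      lra.
    rewrite critE // /= addn0 => E1.
    have : ((tr (cs t) j1)%:R + 1 <= (rr j1)%:R :> rat) by rewrite natr1 ler_nat.
    lra.
  have y0 := row_zero rr_pos rows absorbing (y := fun i0 => (rr i0)%:R * D i0).
  have Dz : forall i0, D i0 = 0.
    move=> i0; have := y0 _ _ i0.
    move=> /(_ _ _) /eqP; rewrite mulf_eq0 (negbTE (rn0 i0)) /= => H; apply/eqP; apply: H.
      move=> i1; apply: mulr_ge0; rewrite ?ler0n // /D subr_ge0 ler_nat HX' //.
    by move=> i1; rewrite LfQ // LDle.
  apply/eqP; rewrite -(eqr_nat rat) trD' (@Lf_ext _ _ _ _ (fun _ => 0 * 0)); last by move=> i0; rewrite Dz mulr0.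
  by rewrite (@Lf_ext _ _ _ _ (fun _ => 0 * 0 + 0 * 0)) ?Lf_lin ?mul0r ?addr0 // => i0; rewrite !mulr0 addr0.
pose T := (\sum_i xs i + m)%N.
case: (claim T) => [[s [_ Hst]]|[HX HM]]; first by exists s.
exfalso; have := count_moves ms T.
have : (\sum_i Xc ms T i <= \sum_i xs i)%N by apply: leq_sum => i _.
move: HM; rewrite /T; lia.
Qed.

Unset Implicit Arguments.

Theorem mainTheorem1 (r a : nat) (rr : 'I_r -> nat) (rT : 'I_r -> 'I_r -> nat)
    (rA : 'I_r -> 'I_a -> nat) (u : 'I_r)
    (rr_pos : forall i, (0 < rr i)%N)
    (rows : forall i, (\sum_j rT i j + \sum_k rA i k)%N = rr i)
    (absorbing : absorbing_reachable rT rA) :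
  (* (a) termination, for every order of type 1 moves *)
  (forall (ms : nat -> move r) (cs : nat -> config r a),
      is_initial rr u (cs 0%N) ->
      (forall t, step rr rT rA u (cs t) (ms t) (cs t.+1)) ->
      exists t, stops rr u (ms t) (cs t.+1)) /\
  (* (b) values at termination *)
  (forall (n : nat) (ms : nat -> move r) (cs : nat -> config r a),
      is_initial rr u (cs 0%N) ->
      (forall t, (t < n)%N -> step rr rT rA u (cs t) (ms t) (cs t.+1)) ->
      (0 < n)%N -> stops rr u (ms n.-1) (cs n) ->
      (forall t, (t.+1 < n)%N -> ~ stops rr u (ms t) (cs t.+1)) ->
      let vu := (\sum_k vcount rA ms n k)%N in
      (0 < vu)%N /\
      (1%:M - Qmx rr rT) \in unitmx /\
      (forall j, Nmx rr rT u j = (wcount rr ms n j)%:R / vu%:R) /\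
      (forall k, Bmx rr rT rA u k = (vcount rA ms n k)%:R / vu%:R)).
Proof.
split.
  move=> ms cs init Hs; exact: (parta rr_pos rows absorbing init Hs).
move=> n ms cs init Hs n0 Hst _; exact: (partb rr_pos rows absorbing init Hs n0 Hst).
Qed.
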